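(* Let $(S,\mu)$ be a complete positive measure space, let $X$ be a real Banach space whose norm is Fréchet differentiable, and let $f\in L^1(\mu,X)$ be non-zero. If $f$ is a right symmetric point of $L^1(\mu,X)$, then $Z(f)^c=\{s\in S:f(s)\neq0\}$ is an atom. Conversely, if $Z(f)^c$ is an atom and $f(s)$ is a right symmetric point of $X$ for each $s\in S$, then $f$ is a right symmetric point of $L^1(\mu,X)$.
   Context: $L^1(\mu,X)$ is the Lebesgue–Bochner space of (classes of a.e. equal) strongly measurable $f:S\to X$ with $\|f\|=\int_S\|f(s)\|\,d\mu(s)<\infty$; $Z(f)=\{s:f(s)=0\}$. In a real normed space $Y$, $x\perp_{BJ}y$ means $\|x+\lambda y\|\ge\|x\|$ for all $\lambda\in\mathbb{R}$; $x$ is a right symmetric point if $y\perp_{BJ}x$ implies $x\perp_{BJ}y$ for all $y\in Y$. The norm of $X$ is Fréchet differentiable if for every non-zero $x$ there is $\varphi\in X^*$ with $\lim_{h\to0}\big|\|x+h\|-\|x\|-\varphi(h)\big|/\|h\|=0$. A measurable set $A$ is an atom if $\mu(A)>0$ and every measurable $B\subseteq A$ has $\mu(B)=0$ or $\mu(B)=\mu(A)$. *)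

(* Defs.v *)
From HB Require Import structures.
From mathcomp Require Import all_boot all_order all_algebra.
From mathcomp Require Import all_classical all_reals all_analysis.
Set Implicit Arguments. Unset Strict Implicit. Unset Printing Implicit Defensive.
Import Order.TTheory GRing.Theory Num.Theory.
Import numFieldNormedType.Exports.
Local Open Scope classical_set_scope.
Local Open Scope ring_scope.

Definition bj_orth (R : realType) (Y : normedModType R) (x y : Y) : Prop :=
  forall lam : R, `|x| <= `|x + lam *: y|.

Definition right_symmetric (R : realType) (Y : normedModType R) (x : Y) : Prop :=
  forall y : Y, bj_orth y x -> bj_orth x y.

Definition frechet_differentiable_norm (R : realType) (X : normedModType R) : Prop :=
  forall x : X, x != 0 ->
    exists phi : X -> R,
      (forall (a : R) (u v : X), phi (a *: u + v) = a * phi u + phi v) /\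
      continuous phi /\
      (fun h : X => (`|x + h| - `|x| - phi h) / `|h|) @ 0^' --> (0 : R).

Definition simple_fun d (S : measurableType d) (R : realType) (X : normedModType R)
    (g : S -> X) : Prop :=
  finite_set (range g) /\ forall x : X, measurable (g @^-1` [set x]).

Definition strongly_measurable d (S : measurableType d) (R : realType)
    (X : normedModType R) (mu : {measure set S -> \bar R}) (f : S -> X) : Prop :=
  exists g : nat -> S -> X, (forall n, simple_fun (g n)) /\
    {ae mu, forall s, (fun n => g n s) @ \oo --> f s}.

Definition L1norm d (S : measurableType d) (R : realType) (X : normedModType R)
    (mu : {measure set S -> \bar R}) (f : S -> X) : \bar R :=
  (\int[mu]_s (`|f s|)%:E)%E.

Definition bochner_L1 d (S : measurableType d) (R : realType) (X : normedModType R)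
    (mu : {measure set S -> \bar R}) (f : S -> X) : Prop :=
  strongly_measurable mu f /\ (L1norm mu f < +oo)%E.

(* Birkhoff-James orthogonality in L^1(mu, X) (computed on representatives;
   the norm of the class of f is L1norm mu f) *)
Definition bj_orth_L1 d (S : measurableType d) (R : realType) (X : normedModType R)
    (mu : {measure set S -> \bar R}) (f g : S -> X) : Prop :=
  forall lam : R, (L1norm mu f <= L1norm mu (fun s => (f s + lam *: g s)%R))%E.

Definition right_symmetric_L1 d (S : measurableType d) (R : realType)
    (X : normedModType R) (mu : {measure set S -> \bar R}) (f : S -> X) : Prop :=
  forall g : S -> X, bochner_L1 mu g -> bj_orth_L1 mu g f -> bj_orth_L1 mu f g.

Definition atom d (S : measurableType d) (R : realType)
    (mu : {measure set S -> \bar R}) (A : set S) : Prop :=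
  measurable A /\ (0 < mu A)%E /\
  forall B, measurable B -> B `<=` A -> mu B = 0%E \/ mu B = mu A.

Definition nonzero_set (S : Type) (R : realType) (X : normedModType R) (f : S -> X)
  : set S := [set s | f s != 0].

(* Main.v *)
Require Import Defs.
From HB Require Import structures.
From mathcomp Require Import all_boot all_order all_algebra.
From mathcomp Require Import all_classical all_reals all_analysis.
Import Order.TTheory GRing.Theory Num.Theory.
Import numFieldNormedType.Exports.
Local Open Scope classical_set_scope.
Local Open Scope ring_scope.
From mathcomp Require Import measurable_realfun.
From mathcomp Require Import ring lra.
Set Implicit Arguments. Unset Strict Implicit.


Section Aux.
Context d (S : measurableType d) (R : realType) (X : normedModType R)
  (mu : {measure set S -> \bar R}).

Lemma sf_preimage (g : S -> X) : simple_fun g -> forall P, measurable (g @^-1` P).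
Proof.
move=> [fin fib] P.
have -> : g @^-1` P = \bigcup_(x in range g `&` P) g @^-1` [set x].
  apply/seteqP; split => [s Ps|s [x [_ Px] /= ->]] //.
  by exists (g s) => //; split => //; exists s.
apply: fin_bigcup_measurable => //; exact: finite_setIl.
Qed.

Lemma sf2_meas (g1 g2 : S -> X) (F : X -> X -> R) :
  simple_fun g1 -> simple_fun g2 -> measurable_fun setT (fun s => F (g1 s) (g2 s)).
Proof.
move=> [f1 m1] [f2 m2] _ Y _; rewrite setTI.
have -> : (fun s => F (g1 s) (g2 s)) @^-1` Y =
   \bigcup_(p in (range g1 `*` range g2) `&` [set p | Y (F p.1 p.2)])
      (g1 @^-1` [set p.1] `&` g2 @^-1` [set p.2]).
  apply/seteqP; split => [s Ys|s [p [[r1 r2] Yp] [/= e1 e2]]].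
  - by exists (g1 s, g2 s) => //; split => //; split; exists s.
  - by rewrite /= e1 e2.
apply: fin_bigcup_measurable.
  exact: finite_setIl (finite_setX f1 f2).
by move=> p _; apply: measurableI.
Qed.

Lemma complete_meas (cmu : measure_is_complete mu) (G : set S) (h : S -> R) :
  mu.-negligible (~` G) -> measurable_fun G h -> measurable_fun setT h.
Proof.
move=> nG mh _ Y mY; rewrite setTI.
have mG : measurable G by rewrite -(setCK G); apply: measurableC; exact: cmu.
rewrite -(setIT (h @^-1` Y)) -(setUCr G) setIUr.
apply: measurableU; first by rewrite setIC; exact: mh.
by apply: cmu; apply: negligibleS nG; exact: subIsetr.
Qed.

Lemma sm_meas (cmu : measure_is_complete mu) (h1 h2 : S -> X) (F : X -> X -> R) :
  strongly_measurable mu h1 -> strongly_measurable mu h2 ->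
  (forall (a b : nat -> X) u v, a @ \oo --> u -> b @ \oo --> v ->
     (fun n => F (a n) (b n)) @ \oo --> F u v) ->
  measurable_fun setT (fun s => F (h1 s) (h2 s)).
Proof.
move=> [g1 [s1 c1]] [g2 [s2 c2]] FC.
have c12 : {ae mu, forall s, ((fun n => g1 n s) @ \oo --> h1 s) /\
                             ((fun n => g2 n s) @ \oo --> h2 s)}.
  by apply: filterS2 c1 c2 => s.
apply: (@complete_meas cmu [set s | ((fun n => g1 n s) @ \oo --> h1 s) /\
                             ((fun n => g2 n s) @ \oo --> h2 s)]); first exact: c12.
apply: (@measurable_realfun.measurable_fun_cvg _ _ _ _ (fun n s => F (g1 n s) (g2 n s))).
  move=> n; apply: (@measurable_funS _ _ _ _ setT) => //.
  exact: sf2_meas.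
by move=> s [ca cb]; exact: FC.
Qed.

Lemma cvg_nlam (lam : R) (a b : nat -> X) u v : a @ \oo --> u -> b @ \oo --> v ->
  (fun n => `|a n + lam *: b n|) @ \oo --> `|u + lam *: v|.
Proof.
move=> ha hb; apply: cvg_norm; apply: cvgD => //; apply: cvgZ => //; exact: cvg_cst.
Qed.

Lemma sm_norm_meas (cmu : measure_is_complete mu) (h1 h2 : S -> X) (lam : R) :
  strongly_measurable mu h1 -> strongly_measurable mu h2 ->
  measurable_fun setT (fun s => `|h1 s + lam *: h2 s|).
Proof.
move=> m1 m2; apply: (@sm_meas cmu h1 h2 (fun a b => `|a + lam *: b|) m1 m2).
move=> a b u v; exact: cvg_nlam.
Qed.

Lemma sm_norm_meas1 (cmu : measure_is_complete mu) (h : S -> X) :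
  strongly_measurable mu h -> measurable_fun setT (fun s => `|h s|).
Proof.
move=> m; have := @sm_norm_meas cmu h h 0 m m.
by apply: eq_measurable_fun => s _; rewrite scale0r addr0.
Qed.

Lemma nz_meas (cmu : measure_is_complete mu) (h : S -> X) :
  strongly_measurable mu h -> measurable (nonzero_set h).
Proof.
move=> m; have := @sm_norm_meas1 cmu h m measurableT _ (measurableC (measurable_set1 (0:R))).
rewrite setTI; congr measurable; apply/seteqP; split => s /=.
  by rewrite /nonzero_set /= => h0; apply/eqP => e; apply: h0; rewrite e normr0.
by rewrite /nonzero_set /= => /eqP h0 /eqP; rewrite normr_eq0 => /eqP.
Qed.

End Aux.



Section Aux2.
Context d (S : measurableType d) (R : realType) (X : normedModType R)
  (mu : {measure set S -> \bar R}).

Lemma sm_restrict (h : S -> X) (D : set S) : measurable D ->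
  strongly_measurable mu h ->
  strongly_measurable mu (fun s => if s \in D then h s else 0).
Proof.
move=> mD [g [sg cg]]; exists (fun n s => if s \in D then g n s else 0); split.
  move=> n; have [fin fib] := sg n; split.
    apply: (@sub_finite_set _ _ (range (g n) `|` [set 0])).
      by move=> x [s _ <-]; case: ifP => _; [left; exists s|right].
    by rewrite finite_setU; split => //; exact: finite_set1.
  move=> x; have [->|x0] := eqVneq x 0.
    have -> : (fun s => if s \in D then g n s else 0) @^-1` [set 0] =
        (D `&` g n @^-1` [set 0]) `|` ~` D.
      apply/seteqP; split => s /=.
        by case: ifPn => [/set_mem sD ->|/negP sD _]; [left|right => /mem_set].
      case=> [[sD e]|sD]; first by rewrite mem_set.
      by case: ifPn => // /set_mem.
    by apply: measurableU; [apply: measurableI|apply: measurableC].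
  have -> : (fun s => if s \in D then g n s else 0) @^-1` [set x] =
      (D `&` g n @^-1` [set x]).
    apply/seteqP; split => s /=.
      by case: ifPn => [/set_mem sD ->|_ e]//; move: x0; rewrite -e eqxx.
    by case=> sD e; rewrite mem_set.
  exact: measurableI.
apply: filterS cg => s cv; case: ifPn => _ //; exact: cvg_cst.
Qed.

Local Open Scope ereal_scope.

Lemma split_int (F : S -> R) (D : set S) : measurable D ->
  measurable_fun setT F -> (forall s, (0 <= F s)%R) ->
  \int[mu]_s (F s)%:E = \int[mu]_(s in D) (F s)%:E + \int[mu]_(s in ~` D) (F s)%:E.
Proof.
move=> mD mF F0; rewrite -ge0_integral_setU ?setUCr //.
- exact: measurableC.
- by apply/measurable_realfun.measurable_EFinP.
- by move=> s _; rewrite lee_fin.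
- by rewrite disj_set2E setICr.
Qed.

Lemma int_fin (F : S -> R) (D : set S) : measurable D ->
  measurable_fun setT F -> (forall s, (0 <= F s)%R) ->
  \int[mu]_s (F s)%:E < +oo ->
  exists r : R, \int[mu]_(s in D) (F s)%:E = r%:E /\ (0 <= r)%R.
Proof.
move=> mD mF F0 fin.
have i0 : 0 <= \int[mu]_(s in D) (F s)%:E.
  by apply: integral_ge0 => s _; rewrite lee_fin.
have ilt : \int[mu]_(s in D) (F s)%:E < +oo.
  apply: le_lt_trans fin; apply: ge0_subset_integral => //.
  - by apply/measurable_realfun.measurable_EFinP.
  - by move=> s _; rewrite lee_fin.
exists (fine (\int[mu]_(s in D) (F s)%:E)); split.
  by rewrite fineK // ge0_fin_numE.
by rewrite fine_ge0.
Qed.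

Lemma pos_int (F : S -> R) (D : set S) : measurable D ->
  measurable_fun setT F -> (forall s, (0 <= F s)%R) ->
  (forall s, D s -> F s != 0%R) -> mu D != 0 ->
  0 < \int[mu]_(s in D) (F s)%:E.
Proof.
move=> mD mF F0 FD muD.
have i0 : 0 <= \int[mu]_(s in D) (F s)%:E.
  by apply: integral_ge0 => s _; rewrite lee_fin.
rewrite lt_neqAle i0 andbT; apply/negP => /eqP /esym i00.
have : \int[mu]_(s in D) `|(EFin \o F) s| = 0.
  rewrite -i00; apply: eq_integral => s _ /=.
  by rewrite ger0_norm.
move/(ae_eq_integral_abs mu mD) => /=.
case.
  apply: (@measurable_funS _ _ _ _ setT) => //; exact/measurable_realfun.measurable_EFinP.
move=> N [mN N0 sub].
move/negP: muD; apply; apply/eqP.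
apply: (subset_measure0 _ _ _ N0) => //.
move=> s Ds; apply: sub => /= /(_ Ds) [] /eqP; by apply/negP; exact: FD.
Qed.

End Aux2.



Section Aux3.
Context d (S : measurableType d) (R : realType) (X : normedModType R)
  (mu : {measure set S -> \bar R}).

Local Open Scope ereal_scope.

Lemma atom_const (h : S -> X) (A : set S) : atom mu A -> mu A < +oo ->
  strongly_measurable mu h ->
  exists s0, A s0 /\ {ae mu, forall s, A s -> h s = h s0}.
Proof.
move=> [mA [A0 Aat]] Afin [g [sg cg]].
have step n : exists c : X, {ae mu, forall s, A s -> g n s = c}.
  have [fin fib] := sg n.
  suff [c [rc Pc]] : exists c, range (g n) c /\ mu (A `&` g n @^-1` [set c]) != 0.
    exists c.
    have mP : measurable (A `&` g n @^-1` [set c]) by exact: measurableI.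
    have [/eqP|e] := Aat _ mP (@subIsetl _ _ _); first by rewrite (negbTE Pc).
    exists (A `\` g n @^-1` [set c]); split.
    - exact: measurableD.
    - rewrite measureD //; transitivity (mu A - mu A); first by congr (_ - _).
      by rewrite subee // ge0_fin_numE.
    - by move=> s /= /not_implyP [As ne]; split.
  apply: contrapT => /forallNP H.
  have H0 c : range (g n) c -> mu (A `&` g n @^-1` [set c]) = 0.
    by move=> rc; apply/eqP; apply: contrapT => nz; apply: (H c); split => //; apply/negP.
  have mU : measurable (\bigcup_(c in range (g n)) (A `&` g n @^-1` [set c])).
    by apply: fin_bigcup_measurable => // c _; exact: measurableI.
  have : mu A <= mu (\bigcup_(c in range (g n)) (A `&` g n @^-1` [set c])).
    apply: le_measure; rewrite ?inE //.
    by move=> s As; exists (g n s); [exists s|split].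
  rewrite measure_fin_bigcup //.
  - rewrite fsbig1; last by move=> c rc; exact: H0.
    by move=> Hle; have := lt_le_trans A0 Hle; rewrite ltxx.
  - by move=> i j _ _ [s [[_ e1] [_ e2]]]; rewrite -e1 -e2.
  - by move=> c _; exact: measurableI.
have [c Hc] := choice step.
have all := ae_foralln Hc.
have G : {ae mu, forall s, (forall n, A s -> g n s = c n) /\
                           ((fun n => g n s) @ \oo --> h s)}.
  by apply: filterS2 all cg => s H1 H2; split.
have [s0 [As0 [e0 cv0]]] : exists s0, A s0 /\ ((forall n, A s0 -> g n s0 = c n) /\
                           ((fun n => g n s0) @ \oo --> h s0)).
  apply: contrapT => nx.
  have : mu.-negligible A.
    apply: negligibleS G => s As Gs; apply: nx; exists s; split => //.
  move/(measure_negligible mA) => A00.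
  by move: A0; rewrite A00 ltxx.
exists s0; split => //.
apply: filterS G => s [e cv] As.
have ee : (fun n => g n s) = (fun n => g n s0).
  by apply/funext => n; rewrite e // e0.
by rewrite -(norm_cvg_lim cv) -(norm_cvg_lim cv0) ee.
Qed.

Lemma atom_fin (cmu : measure_is_complete mu) (f : S -> X) :
  strongly_measurable mu f -> L1norm mu f < +oo ->
  atom mu (nonzero_set f) -> mu (nonzero_set f) < +oo.
Proof.
move=> sf fin [mA [A0 Aat]].
have mF := sm_norm_meas1 cmu sf.
pose F := fun s => `|f s|%R.
pose An n := setT `&` [set s | (n.+1%:R^-1)%:E <= `|(F s)%:E|].
have mAn n : measurable (An n).
  have -> : An n = setT `&` (F @^-1` `[(n.+1%:R^-1)%R, +oo[%classic).
    apply/seteqP; split => s [_ /=]; rewrite in_itv /= andbT /F.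
      by rewrite lee_fin ger0_norm.
    by move=> H; split => //=; rewrite /F lee_fin ger0_norm.
  exact: mF measurableT _ (measurable_itv _).
have Anfin n : mu (An n) < +oo.
  have mFE : measurable_fun setT (fun x => (F x)%:E).
    by apply/measurable_EFinP.
  have a0 : (0 < n.+1%:R^-1 :> R)%R by rewrite invr_gt0 ltr0Sn.
  have H : (n.+1%:R^-1)%:E * mu (An n) <= \int[mu]_(x in setT) `|(F x)%:E|
    := @le_integral_abse _ _ _ mu setT measurableT (fun x => (F x)%:E) _ mFE a0.
  have H2 : \int[mu]_(x in setT) `|(F x)%:E| < +oo.
    apply: le_lt_trans fin; rewrite le_eqVlt; apply/orP; left; apply/eqP.
    by apply: eq_integral => s _ /=; rewrite /F ger0_norm.
  have H3 := le_lt_trans H H2.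
  rewrite ltNge leye_eq; apply/negP => /eqP inf; move: H3.
  by rewrite inf gt0_muley ?ltxx // lte_fin.
have AnA n : An n `<=` nonzero_set f.
  move=> s [_ /=]; rewrite /nonzero_set /= /F => H; apply/eqP => e.
  by move: H; rewrite e normr0 normr0 lee_fin leNgt invr_gt0 ltr0Sn.
rewrite ltNge leye_eq; apply/negP => /eqP Ainf.
have nA : mu.-negligible (nonzero_set f).
  apply: (@negligibleS _ _ _ _ (\bigcup_n An n)).
    move=> s /= fs0.
    have Fs0 : (0 < F s)%R by rewrite /F normr_gt0.
    have := near_infty_natSinv_lt (PosNum Fs0).
    case=> N _ HN; exists N => //; split => //=.
    rewrite lee_fin ger0_norm ?ltW //.
    by apply: (HN N) => /=.
  apply: negligible_bigcup => n.
  apply/negligibleP => //.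
  have [e|e] := Aat _ (mAn n) (AnA n) => //.
  by move: (Anfin n); rewrite e Ainf ltxx.
by move: A0; rewrite (measure_negligible mA nA) ltxx.
Qed.

End Aux3.



Ltac side := first [ by move=> ? _; rewrite lee_fin |
  by apply: (@measurable_funS _ _ _ _ setT) => //; apply/measurable_EFinP ].

Section Aux4.
Context d (S : measurableType d) (R : realType) (X : normedModType R)
  (mu : {measure set S -> \bar R}).

Local Open Scope ereal_scope.

Lemma dir1_core (cmu : measure_is_complete mu) (f : S -> X) (D E : set S) :
  strongly_measurable mu f -> L1norm mu f < +oo ->
  measurable D -> measurable E -> D `&` E = set0 ->
  0 < \int[mu]_(s in D) (`|f s|)%:E ->
  \int[mu]_(s in D) (`|f s|)%:E <= \int[mu]_(s in E) (`|f s|)%:E ->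
  ~ right_symmetric_L1 mu f.
Proof.
move=> sf fin mD mE DE ID IDE rs.
pose F := fun s => `|f s|%R.
have F0 s : (0 <= F s)%R by exact: normr_ge0.
have mF : measurable_fun setT F := sm_norm_meas1 cmu sf.
have [a [Ia a0]] := int_fin mD mF F0 fin.
have [b [Ib b0]] := int_fin mE mF F0 fin.
have mCD : measurable (~` D) by exact: measurableC.
have [c [Ic c0]] := int_fin mCD mF F0 fin.
have ED : E `<=` ~` D.
  by move=> s Es Ds; have : (D `&` E) s by []; rewrite DE.
pose g := fun s => if s \in D then f s else 0%R.
have sg : strongly_measurable mu g := sm_restrict mD sf.
have Lg : L1norm mu g = a%:E.
  rewrite /L1norm (split_int _ mD); last 2 first.
    exact (sm_norm_meas1 cmu sg).
    by move=> s; exact: normr_ge0.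
  rewrite -Ia -[X in _ = X]adde0; congr (_ + _).
    by apply: eq_integral => s sD; rewrite /g sD.
  apply: integral0_eq => s nD; rewrite /g memNset ?normr0 //.
have gL1 : bochner_L1 mu g by split => //; rewrite Lg ltry.
have gf : bj_orth_L1 mu g f.
  move=> lam; rewrite Lg /L1norm.
  have mG := sm_norm_meas cmu lam sg sf.
  rewrite (split_int _ mD) //.
  have -> : \int[mu]_(s in D) (`|g s + lam *: f s|)%:E = (`|1 + lam| * a)%:E.
    rewrite EFinM -Ia -ge0_integralZl_EFin //; try side.
    apply: eq_integral => s sD; rewrite /g sD.
    by rewrite -EFinM /F -[X in (X + _)%R]scale1r -scalerDl normrZ.
  have : (`|lam| * b)%:E <= \int[mu]_(s in ~` D) (`|g s + lam *: f s|)%:E.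
    apply: (@le_trans _ _ (\int[mu]_(s in E) (`|g s + lam *: f s|)%:E)); last first.
      by apply: ge0_subset_integral => //; try side.
    rewrite EFinM -Ib -ge0_integralZl_EFin //; try side.
    rewrite le_eqVlt; apply/orP; left; apply/eqP.
    apply: eq_integral => s sE; rewrite /g memNset; last first.
      by apply: ED; exact: set_mem.
    by rewrite add0r normrZ.
  move=> H; apply: le_trans (leeD2l _ H); rewrite -EFinD lee_fin.
  have h1 : (1 <= `|1 + lam| + `|lam|)%R.
    by have := ler_normD (1 + lam)%R (- lam)%R; rewrite normrN addrK normr1.
  have u0 : (0 <= `|1 + lam|)%R by exact: normr_ge0.
  have v0 : (0 <= `|lam|)%R by exact: normr_ge0.
  have ab : (a <= b)%R by rewrite -lee_fin -Ia -Ib.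
  nra.
have := rs g gL1 gf (-1)%R.
rewrite /L1norm.
rewrite (split_int _ mD (sm_norm_meas1 cmu sf) (fun s => normr_ge0 _)).
rewrite (split_int _ mD (sm_norm_meas cmu (-1)%R sf sg) (fun s => normr_ge0 _)).
have -> : \int[mu]_(s in D) (`|f s + (-1)%R *: g s|)%:E = 0.
  apply: integral0_eq => s sD; rewrite /g (mem_set sD).
  by rewrite scaleN1r subrr normr0.
have -> : \int[mu]_(s in ~` D) (`|f s + (-1)%R *: g s|)%:E =
          \int[mu]_(s in ~` D) (`|f s|)%:E.
  by apply: eq_integral => s sD; rewrite /g memNset ?scaler0 ?addr0 //; exact: set_mem.
rewrite Ia Ic add0e -EFinD lee_fin => H.
have : (a <= 0)%R by lra.
by rewrite leNgt -lte_fin -Ia ID.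
Qed.

End Aux4.



Section Aux5.
Context d (S : measurableType d) (R : realType) (X : normedModType R)
  (mu : {measure set S -> \bar R}).

Local Open Scope ereal_scope.

Lemma dir1 (cmu : measure_is_complete mu) (f : S -> X) :
  bochner_L1 mu f -> L1norm mu f <> 0 -> right_symmetric_L1 mu f ->
  atom mu (nonzero_set f).
Proof.
move=> [sf fin] n0 rs.
pose F := fun s => `|f s|%R.
have F0 s : (0 <= F s)%R by exact: normr_ge0.
have mF : measurable_fun setT F := sm_norm_meas1 cmu sf.
have mA := nz_meas cmu sf.
have FA s : nonzero_set f s -> F s != 0%R.
  by rewrite /nonzero_set /F /= normr_eq0.
have nA s : (~` nonzero_set f) s -> f s = 0%R.
  by rewrite /nonzero_set /= => /negP; rewrite negbK => /eqP.
split => //; split.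
  rewrite lt0e measure_ge0 andbT; apply/negP => /eqP A0.
  apply: n0; rewrite /L1norm (split_int _ mA mF F0).
  rewrite (ge0_negligible_integral mA mA) //; try side.
  rewrite setDv integral_set0 add0e.
  by apply: integral0_eq => s /nA; rewrite /F => ->; rewrite normr0.
move=> B mB BA; apply: contrapT => /not_orP [B0 BA'].
pose C := nonzero_set f `\` B.
have mC : measurable C by exact: measurableD.
have C0 : mu C != 0.
  apply/negP => /eqP C0; apply: BA'.
  have := measureDI mu mA mB; rewrite setIidr // => ->.
  by rewrite -[LHS]add0e; congr (_ + _); exact: (esym C0).
have BC : B `&` C = set0.
  by apply/seteqP; split => s // [Bs [_ nBs]].
have CB : C `&` B = set0 by rewrite setIC.
have IB := pos_int mB mF F0 (fun s Bs => FA s (BA s Bs)) (introN eqP B0).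
have IC := pos_int mC mF F0 (fun s Cs => FA s (proj1 Cs)) C0.
have [le|lt] := leP (\int[mu]_(s in B) (F s)%:E) (\int[mu]_(s in C) (F s)%:E).
  exact: (dir1_core cmu sf fin mB mC BC IB le).
exact: (dir1_core cmu sf fin mC mB CB IC (ltW lt)).
Qed.

End Aux5.



Section Aux6.
Context d (S : measurableType d) (R : realType) (X : normedModType R)
  (mu : {measure set S -> \bar R}).

Local Open Scope ereal_scope.

Lemma comp_int (cmu : measure_is_complete mu) (A : set S) (h1 h2 : S -> X)
    (u v : X) (lam : R) : measurable A ->
  strongly_measurable mu h1 -> strongly_measurable mu h2 ->
  {ae mu, forall s, A s -> h1 s = u} -> {ae mu, forall s, A s -> h2 s = v} ->
  \int[mu]_s (`|h1 s + lam *: h2 s|)%:E =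
    (`|u + lam *: v|)%:E * mu A + \int[mu]_(s in ~` A) (`|h1 s + lam *: h2 s|)%:E.
Proof.
move=> mA s1 s2 e1 e2.
have mG := sm_norm_meas cmu lam s1 s2.
rewrite (split_int _ mA mG (fun s => normr_ge0 _)); congr (_ + _).
rewrite -integral_cst //.
apply: ae_eq_integral => //.
- by apply: (@measurable_funS _ _ _ _ setT) => //; apply/measurable_EFinP.
- by apply: filterS2 e1 e2 => s H1 H2 As; rewrite /= H1 ?H2.
Qed.

Lemma int_scale0 (h : S -> X) (D : set S) :
  \int[mu]_(s in D) (`|h s + 0%R *: h s|)%:E = \int[mu]_(s in D) (`|h s|)%:E.
Proof. by apply: eq_integral => s _; rewrite scale0r addr0. Qed.

Lemma dir2 (cmu : measure_is_complete mu) (f : S -> X) :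
  bochner_L1 mu f -> atom mu (nonzero_set f) ->
  (forall s, right_symmetric (f s)) -> right_symmetric_L1 mu f.
Proof.
move=> [sf fin] hat rsp g [sg ging] gf lam.
have Afin := atom_fin cmu sf fin hat.
have [s0 [As0 ef]] := atom_const hat Afin sf.
have [t0 [At0 eg]] := atom_const hat Afin sg.
have [mA [A0 _]] := hat.
pose x := f s0; pose y := g t0.
have [m [em m0]] : exists m : R, mu (nonzero_set f) = m%:E /\ (0 < m)%R.
  have fA : mu (nonzero_set f) \is a fin_num by rewrite ge0_fin_numE.
  exists (fine (mu (nonzero_set f))); split; first by rewrite fineK.
  by rewrite -lte_fin fineK.
have nA s : (~` nonzero_set f) s -> f s = 0%R.
  by rewrite /nonzero_set /= => /negP; rewrite negbK => /eqP.
have mCA : measurable (~` nonzero_set f) by exact: measurableC.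
have [c [Ic c0]] := int_fin mCA (sm_norm_meas1 cmu sg) (fun s => normr_ge0 _) ging.
have Lg : L1norm mu g = (`|y| * m + c)%:E.
  have := comp_int cmu 0%R mA sg sg eg eg.
  rewrite scale0r addr0 !int_scale0 /L1norm => ->.
  by rewrite em Ic -EFinM -EFinD.
have Lgf : L1norm mu (fun s => (g s + lam *: f s)%R) = ((`|y + lam *: x| * m + c)%R)%:E.
  rewrite /L1norm (comp_int cmu lam mA sg sf eg ef) em EFinD EFinM -Ic.
  congr (_ + _); apply: eq_integral => s /set_mem /nA ->.
  by rewrite scaler0 addr0.
have yx : bj_orth y x.
  move=> mu0; have := gf mu0; rewrite Lg.
  have -> : L1norm mu (fun s => (g s + mu0 *: f s)%R) = ((`|y + mu0 *: x| * m + c)%R)%:E.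
    rewrite /L1norm (comp_int cmu mu0 mA sg sf eg ef) em EFinD EFinM -Ic.
    congr (_ + _); apply: eq_integral => s /set_mem /nA ->.
    by rewrite scaler0 addr0.
  by rewrite lee_fin lerD2r ler_pM2r.
have xy := rsp s0 y yx lam.
have Lf : L1norm mu f = (`|x| * m)%:E.
  have := comp_int cmu 0%R mA sf sf ef ef.
  rewrite scale0r addr0 !int_scale0 /L1norm => ->.
  rewrite em -EFinM [X in _ + X](_ : _ = 0) ?adde0 //.
  by apply: integral0_eq => s /nA ->; rewrite normr0.
rewrite Lf /L1norm (comp_int cmu lam mA sf sg ef eg) em -EFinM.
apply: le_trans (leeDl _ _); last by apply: integral_ge0 => s _; rewrite lee_fin.
by rewrite lee_fin ler_pM2r.
Qed.

End Aux6.


Unset Implicit Arguments. Set Strict Implicit.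

Theorem theorem3p10 (d : measure_display) (S : measurableType d) (R : realType)
    (X : completeNormedModType R) (mu : {measure set S -> \bar R})
    (f : S -> X) :
  measure_is_complete mu ->
  frechet_differentiable_norm X ->
  bochner_L1 mu f ->
  L1norm mu f <> 0%E ->
  (right_symmetric_L1 mu f -> atom mu (nonzero_set f)) /\
  (atom mu (nonzero_set f) -> (forall s, right_symmetric (f s)) ->
     right_symmetric_L1 mu f).
Proof.
move=> cmu _ hf n0; split.
  exact (@dir1 d S R X mu cmu f hf n0).
move=> hat rsp; exact (@dir2 d S R X mu cmu f hf hat rsp).
Qed.
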